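(* Let $S$ be a semidomain. If $S[x]$ is a length-factorial semidomain, then $S$ is an integral domain.
   Context: A semidomain is a subset $S$ of an integral domain $R$ containing $0$ and $1$ and closed under addition and multiplication; $S[x]$ is the semidomain of polynomials in $R[x]$ with coefficients in $S$. For a semidomain $T$, $T^*=T\setminus\{0\}$ is a multiplicative monoid; an atom is a nonunit $a\in T^*$ such that $a=bc$ with $b,c\in T^*$ forces $b$ or $c$ to be a unit; $T$ is atomic if every nonunit of $T^*$ is a finite product of atoms. A factorization of $b$ is a formal product of atoms (considered up to order and up to replacing atoms by associates) equal to $b$ up to a unit; its length is the number of atoms counted with multiplicity. $T$ is a length-factorial semidomain (LFS) if $T$ is atomic and any two distinct factorizations of the same element have distinct lengths. *)

(* Defs.v *)
From HB Require Import structures.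
From mathcomp Require Import all_boot all_order all_algebra.
Set Implicit Arguments. Unset Strict Implicit. Unset Printing Implicit Defensive.
Import GRing.Theory.
Local Open Scope ring_scope.

Definition semidomain (R : idomainType) (S : {pred R}) : Prop :=
  [/\ 0 \in S, 1 \in S,
      (forall a b, a \in S -> b \in S -> a + b \in S) &
      (forall a b, a \in S -> b \in S -> a * b \in S)].

Definition polysemi (R : idomainType) (S : {pred R}) : {pred {poly R}} :=
  fun p => p \is a polyOver S.

Section Factorization.
Variables (D : idomainType) (T : {pred D}).

Definition unitIn (u : D) : Prop :=
  u \in T /\ u != 0 /\ exists v, [/\ v \in T, v != 0 & u * v = 1].

Definition atomIn (a : D) : Prop :=
  [/\ a \in T, a != 0, ~ unitIn a &
      forall b c, b \in T -> b != 0 -> c \in T -> c != 0 -> a = b * c ->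
        unitIn b \/ unitIn c].

Definition assocIn (a b : D) : Prop := exists u, unitIn u /\ a = u * b.

Definition atomicIn : Prop :=
  forall x, x \in T -> x != 0 -> ~ unitIn x ->
    exists s : seq D, (forall a, a \in s -> atomIn a) /\ x = \prod_(a <- s) a.

Definition factorizationOf (x : D) (s : seq D) : Prop :=
  (forall a, a \in s -> atomIn a) /\ assocIn x (\prod_(a <- s) a).

Definition same_factorization (s t : seq D) : Prop :=
  exists t', perm_eq t t' /\ size s = size t' /\
    forall i, (i < size s)%N -> assocIn (nth 0 s i) (nth 0 t' i).

Definition LFS : Prop :=
  atomicIn /\
  forall x s t, x \in T -> x != 0 ->
    factorizationOf x s -> factorizationOf x t ->
    ~ same_factorization s t -> size s <> size t.

End Factorization.

(* Main.v *)
Require Import Defs.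
From HB Require Import structures.
From mathcomp Require Import all_boot all_order all_algebra ring zify.
From Stdlib Require Import ClassicalEpsilon.
Import GRing.Theory.
Local Open Scope ring_scope.
Set Implicit Arguments. Unset Strict Implicit.

Section Main.
Variable R : idomainType.
Variable S : {pred R}.
Hypothesis HS : semidomain S.
Hypothesis Hm1 : (-1 \in S) = false.

Local Notation T := (polysemi S).

Lemma S0 : 0 \in S. Proof. by case: HS. Qed.
Lemma S1 : 1 \in S. Proof. by case: HS. Qed.
Lemma SD a b : a \in S -> b \in S -> a + b \in S. Proof. by case: HS => _ _ h _; apply: h. Qed.
Lemma SM a b : a \in S -> b \in S -> a * b \in S. Proof. by case: HS => _ _ _ h; apply: h. Qed.

Lemma Snat n : n%:R \in S.
Proof. elim: n => [|n IH]; first exact: S0. by rewrite -addn1 natrD SD // S1. Qed.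

Lemma Sneg n : (- (n.+1)%:R \in S) = false.
Proof.
apply/negbTE/negP => H; have E : (-1 : R) = - (n.+1)%:R + n%:R.
  by rewrite -addn1 natrD; ring.
by move: Hm1; rewrite E SD // Snat.
Qed.

Lemma natr_neq0 n : (n.+1)%:R != 0 :> R.
Proof.
apply/negP => /eqP H; have E : (-1 : R) = n%:R.
  by move: H; rewrite -addn1 natrD => /eqP; rewrite addr_eq0 eq_sym => /eqP.
by move: Hm1; rewrite E Snat.
Qed.

Lemma natr_gt0 n : (0 < n)%N -> n%:R != 0 :> R.
Proof. by case: n => // n _; exact: natr_neq0. Qed.

Lemma TP (p : {poly R}) : reflect (forall i, p`_i \in S) (p \in T).
Proof.
rewrite /polysemi; apply: (iffP (all_nthP 0)) => [Sp i | Sp i _]; last exact: Sp.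
by have [/Sp // | /(nth_default 0)->] := ltnP i (size p); apply: S0.
Qed.

Lemma Ssum I (r : seq I) (P : pred I) (F : I -> R) :
  (forall i, P i -> F i \in S) -> \sum_(i <- r | P i) F i \in S.
Proof. by move=> H; elim/big_rec: _ => [|i x Pi Hx]; [exact: S0| apply: SD => //; apply: H]. Qed.

Lemma TD p q : p \in T -> q \in T -> p + q \in T.
Proof. by move=> /TP Hp /TP Hq; apply/TP => i; rewrite coefD SD. Qed.
Lemma TM p q : p \in T -> q \in T -> p * q \in T.
Proof. by move=> /TP Hp /TP Hq; apply/TP => i; rewrite coefM; apply: Ssum => j _; rewrite SM. Qed.
Lemma TC c : (c%:P \in T) = (c \in S).
Proof. apply/TP/idP => [/(_ 0%N)|H i]; rewrite ?coefC //=; by case: eqP => _ //; exact: S0. Qed.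
Lemma TN n : (n%:R : {poly R}) \in T.
Proof. by rewrite -polyC_natr TC Snat. Qed.
Lemma TX : 'X \in T.
Proof. apply/TP => i; rewrite coefX; case: eqP => _; [exact: S1|exact: S0]. Qed.
Lemma TXn n : 'X^n \in T.
Proof. elim: n => [|n IH]; first by rewrite expr0; exact: (TN 1). by rewrite exprS TM // TX. Qed.
Lemma T1 : (1 : {poly R}) \in T. Proof. exact: (TN 1). Qed.

Implicit Types p q : {poly R}.
Definition rvK (K : nat) (p : {poly R}) : {poly R} := \poly_(j < K.+1) p`_(K - j).

Lemma coef_rvK K p j : (rvK K p)`_j = if (j <= K)%N then p`_(K - j) else 0.
Proof. by rewrite coef_poly ltnS. Qed.

Lemma rvKD K p q : rvK K (p + q) = rvK K p + rvK K q.
Proof. by apply/polyP => j; rewrite coefD !coef_rvK; case: ifP; rewrite ?coefD ?addr0. Qed.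
Lemma rvK0 K : rvK K 0 = 0.
Proof. by apply/polyP => j; rewrite coef_rvK !coef0; case: (j <= K)%N. Qed.
Lemma rvK_sum K I (r : seq I) (P : pred I) (F : I -> {poly R}) :
  rvK K (\sum_(i <- r | P i) F i) = \sum_(i <- r | P i) rvK K (F i).
Proof. by apply: (big_morph (rvK K)); [exact: rvKD | exact: rvK0]. Qed.

Lemma rvK_Xn K k c : (k <= K)%N -> rvK K (c *: 'X^k) = c *: 'X^(K - k).
Proof.
move=> hk; apply/polyP => j; rewrite coef_rvK !coefZ !coefXn.
case: (leqP j K) => hj.
  by congr (_ * (_ : bool)%:R); apply/eqP/eqP; lia.
by rewrite (_ : (j == K - k)%N = false) ?mulr0 //; apply/eqP; lia.
Qed.

Lemma poly_expand p N : (size p <= N.+1)%N -> p = \sum_(i < N.+1) p`_i *: 'X^i.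
Proof.
move=> hs; rewrite -poly_def; apply/polyP => i; rewrite coef_poly.
by case: ltnP => // hi; move/leq_sizeP: hs => ->.
Qed.

Lemma rvK_expand p N : (size p <= N.+1)%N -> rvK N p = \sum_(i < N.+1) p`_i *: 'X^(N - i).
Proof.
move=> hs; rewrite {1}(poly_expand hs) rvK_sum; apply: eq_bigr => i _.
by rewrite rvK_Xn // -ltnS.
Qed.

Lemma rvK_mul N M p q : (size p <= N.+1)%N -> (size q <= M.+1)%N ->
  rvK (N + M) (p * q) = rvK N p * rvK M q.
Proof.
move=> hp hq; rewrite (rvK_expand hp) (rvK_expand hq) {1}(poly_expand hp) {1}(poly_expand hq).
rewrite mulr_suml rvK_sum mulr_suml; apply: eq_bigr => i _.
rewrite mulr_sumr rvK_sum mulr_sumr; apply: eq_bigr => j _.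
rewrite -scalerAl -scalerAr scalerA -exprD -scalerAl -scalerAr scalerA -exprD.
rewrite rvK_Xn; last by have := ltn_ord i; have := ltn_ord j; lia.
congr (_ *: 'X^_); have := ltn_ord i; have := ltn_ord j; lia.
Qed.

Definition rho (p : {poly R}) := rvK (size p).-1 p.

Lemma rho0 : rho 0 = 0. Proof. by rewrite /rho rvK0. Qed.

Lemma rhoM p q : rho (p * q) = rho p * rho q.
Proof.
have [->|p0] := eqVneq p 0; first by rewrite mul0r rho0 mul0r.
have [->|q0] := eqVneq q 0; first by rewrite mulr0 rho0 mulr0.
rewrite /rho size_mul //.
have hp := size_poly_gt0 p; have hq := size_poly_gt0 q; rewrite p0 in hp; rewrite q0 in hq.
rewrite (_ : (size p + size q).-1.-1 = (size p).-1 + (size q).-1)%N; last by lia.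
by apply: rvK_mul; lia.
Qed.

Lemma rho_coef0 p : (rho p)`_0 = lead_coef p.
Proof. by rewrite coef_rvK leq0n subn0 lead_coefE. Qed.

Lemma rho_neq0 p : p != 0 -> rho p != 0.
Proof.
move=> p0; apply/eqP => h; move: (rho_coef0 p); rewrite h coef0 => /esym/eqP.
by rewrite lead_coef_eq0 (negbTE p0).
Qed.

Lemma rho_size p : p`_0 != 0 -> size (rho p) = size p.
Proof.
move=> h0; have p0 : p != 0 by apply: contraNneq h0 => ->; rewrite coef0.
have hp := size_poly_gt0 p; rewrite p0 in hp.
by rewrite /rho /rvK size_poly_eq /= ?subnn // prednK.
Qed.

Lemma rhoK p : p`_0 != 0 -> rho (rho p) = p.
Proof.
move=> h0; rewrite {1}/rho rho_size //.
have hs : (size p <= (size p).-1.+1)%N by apply: leqSpred.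
rewrite /rho (rvK_expand hs) rvK_sum [RHS](poly_expand hs); apply: eq_bigr => i _.
by rewrite rvK_Xn ?leq_subr // subKn // -ltnS.
Qed.

Lemma rhoT p : p \in T -> rho p \in T.
Proof. by move=> /TP h; apply/TP => j; rewrite coef_rvK; case: ifP => _ //; exact: S0. Qed.

Lemma rhoC c : rho c%:P = c%:P.
Proof.
have [->|c0] := eqVneq c 0; first by rewrite rho0.
by rewrite /rho size_polyC c0 /=; apply/polyP => j; rewrite coef_rvK !coefC; case: j.
Qed.

Lemma rho_prod (s : seq {poly R}) : rho (\prod_(a <- s) a) = \prod_(a <- map rho s) a.
Proof.
rewrite big_map; apply: (big_morph rho); [exact: rhoM|].
by rewrite -[1]/(1%:P) rhoC.
Qed.

Lemma unit_size u : unitIn T u -> size u = 1%N.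
Proof.
case=> _ [u0 [v [_ v0 uv]]].
have := size_mul u0 v0; rewrite uv size_poly1.
have := size_poly_gt0 u; have := size_poly_gt0 v; rewrite u0 v0; lia.
Qed.

Lemma rho_unit u : unitIn T u -> rho u = u.
Proof. by move=> /unit_size h; rewrite [u]size1_polyC ?h // rhoC. Qed.

Lemma unit1 : unitIn T 1.
Proof. by split; [exact: T1|split; [exact: oner_neq0| exists 1; split; [exact: T1|exact: oner_neq0|rewrite mulr1]]]. Qed.

Lemma unitM u w : unitIn T u -> unitIn T w -> unitIn T (u * w).
Proof.
move=> [Tu [u0 [v [Tv v0 uv]]]] [Tw [w0 [z [Tz z0 wz]]]].
split; first exact: TM. split; first by rewrite mulf_neq0.
exists (v * z); split; [exact: TM| by rewrite mulf_neq0|].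
by rewrite mulrACA uv wz mulr1.
Qed.

Lemma atomT a : atomIn T a -> a \in T. Proof. by case. Qed.

Lemma rho_atom a : atomIn T a -> a`_0 != 0 -> atomIn T (rho a).
Proof.
move=> [Ta a0 na ha] h0.
have ra : rho (rho a) = a := rhoK h0.
split; [exact: rhoT | exact: rho_neq0 | |].
  move=> hu; apply: na; have e : a = rho a by rewrite -{1}ra rho_unit.
  by rewrite e.
move=> b c Tb b0 Tc c0 e.
have : (rho a)`_0 != 0 by rewrite rho_coef0 lead_coef_eq0.
rewrite e coef0M => bc0.
have b00 : b`_0 != 0 by apply: contraNneq bc0 => ->; rewrite mul0r.
have c00 : c`_0 != 0 by apply: contraNneq bc0 => ->; rewrite mulr0.
have : a = rho b * rho c by rewrite -rhoM -e ra.
move=> /(ha _ _ (rhoT Tb) (rho_neq0 b0) (rhoT Tc) (rho_neq0 c0)) [hb|hc].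
  by left; rewrite -(rhoK b00) rho_unit.
by right; rewrite -(rhoK c00) rho_unit.
Qed.

Lemma Tprod (f : seq {poly R}) : (forall a, a \in f -> a \in T) -> \prod_(a <- f) a \in T.
Proof.
move=> H; rewrite big_seq; elim/big_rec: _ => [|i x /H Ti Tx]; [exact: T1 | exact: TM].
Qed.

Lemma fact_coef0 Y f : factorizationOf T Y f -> Y`_0 != 0 -> forall a, a \in f -> a`_0 != 0.
Proof.
move=> [_ [u [_ ->]]] h a af; move: h; rewrite (big_rem a af) /= coef0M coef0M.
by apply: contraNneq => ->; rewrite mul0r mulr0.
Qed.

Lemma rho_fact Y f : factorizationOf T Y f -> Y`_0 != 0 -> factorizationOf T (rho Y) (map rho f).
Proof.
move=> hf h0; have hc := fact_coef0 hf h0; case: hf => ha [u [hu eY]].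
split.
  by move=> b /mapP [a af ->]; apply: rho_atom; [exact: ha | exact: hc].
by exists u; split => //; rewrite eY rhoM rho_unit // rho_prod.
Qed.

Lemma fact_exists x : LFS T -> x \in T -> x != 0 -> exists f, factorizationOf T x f.
Proof.
move=> [hat _] Tx x0; case: (excluded_middle_informative (unitIn T x)) => hu.
  by exists [::]; split => // ; exists x; rewrite big_nil mulr1.
have [s [hs e]] := hat x Tx x0 hu.
by exists s; split => //; exists 1; rewrite mul1r; split => //; exact: unit1.
Qed.

Definition pb (P : Prop) : bool := if excluded_middle_informative P then true else false.
Lemma pbP P : reflect P (pb P).
Proof. by rewrite /pb; case: excluded_middle_informative => h; constructor. Qed.

Definition divl (l a : {poly R}) : bool := pb (exists r, r \in T /\ a = l * r).

Lemma divl_assoc l a b : assocIn T a b -> divl l a = divl l b.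
Proof.
move=> [u [[Tu [u0 [v [Tv v0 uv]]]] e]].
apply/pbP/pbP => [[r [Tr er]]|[r [Tr er]]].
  exists (v * r); split; first exact: TM.
  by rewrite mulrCA -er e mulrA [v * u]mulrC uv mul1r.
by exists (u * r); split; [exact: TM | rewrite e er mulrCA].
Qed.

Lemma count_nth_eq (P : pred {poly R}) (s t : seq {poly R}) : size s = size t ->
  (forall i, (i < size s)%N -> P (nth 0 s i) = P (nth 0 t i)) -> count P s = count P t.
Proof.
elim: s t => [|x s IH] [|y t] //= [hs] H.
by rewrite (H 0%N) // (IH t hs) // => i hi; apply: (H i.+1).
Qed.

Lemma count_same l s t : same_factorization T s t -> count (divl l) s = count (divl l) t.
Proof.
move=> [t' [pt [hs H]]]; rewrite (permP pt).
by apply: count_nth_eq => // i hi; apply: divl_assoc; apply: H.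
Qed.

Lemma count_chunk l Y f : factorizationOf T Y f ->
  (forall r, r \in T -> Y <> l * r) -> count (divl l) f = 0%N.
Proof.
move=> [ha [u [[Tu _] eY]]] H; apply/eqP; rewrite -leqn0 leqNgt -has_count; apply/hasP => [[a af /pbP [r [Tr er]]]].
apply: (H (u * r * \prod_(b <- rem a f) b)).
  rewrite TM ?TM //; apply: Tprod => b /mem_rem bf; exact: atomT (ha b bf).
by rewrite eY (big_rem a af) /= er; ring.
Qed.

Definition pl : {poly R} := 'X + 2.
Definition pA : {poly R} := 'X^4 + 4 * 'X^2 + 16.
Definition pB : {poly R} := 'X^2 + 2 * 'X + 4.
Definition pC : {poly R} := 'X^3 + 8.
Definition pQ : {poly R} := 'X^2 - 2 * 'X + 4.

Lemma relAB : pl * pA = pB * pC. Proof. rewrite /pl /pA /pB /pC; ring. Qed.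
Lemma relCQ : pC = pl * pQ. Proof. rewrite /pl /pQ /pC; ring. Qed.

Lemma Tl : pl \in T. Proof. rewrite /pl; apply: TD; [exact: TX | exact: (TN 2)]. Qed.
Lemma TA : pA \in T.
Proof. rewrite /pA; apply: TD; [apply: TD; [exact: TXn | apply: TM; [exact: (TN 4) | exact: TXn]] | exact: (TN 16)]. Qed.
Lemma TB : pB \in T.
Proof. rewrite /pB; apply: TD; [apply: TD; [exact: TXn | apply: TM; [exact: (TN 2) | exact: TX]] | exact: (TN 4)]. Qed.
Lemma TCC : pC \in T. Proof. rewrite /pC; apply: TD; [exact: TXn | exact: (TN 8)]. Qed.

Lemma horn1 x : (1 : {poly R}).[x] = 1. Proof. by rewrite -polyC1 hornerC. Qed.
Lemma hornN n x : (n%:R : {poly R}).[x] = n%:R. Proof. by rewrite -polyC_natr hornerC. Qed.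
Lemma hornA x : pA.[x] = x ^+ 4 + 4 * x ^+ 2 + 16. Proof. rewrite /pA !hornerD !hornerM ?hornN !hornerX ?horn1; ring. Qed.
Lemma hornB x : pB.[x] = x ^+ 2 + 2 * x + 4. Proof. rewrite /pB !hornerD !hornerM ?hornN !hornerX ?horn1; ring. Qed.
Lemma hornC x : pC.[x] = x ^+ 3 + 8. Proof. rewrite /pC !hornerD ?hornerM ?hornN !hornerX ?horn1; ring. Qed.
Lemma hornl x : pl.[x] = x + 2. Proof. rewrite /pl !hornerD ?hornN !hornerX ?horn1; ring. Qed.

Lemma l0 : pl`_0 != 0. Proof. by rewrite -horner_coef0 hornl add0r (natr_neq0 1). Qed.
Lemma A0 : pA`_0 != 0.
Proof. rewrite -horner_coef0 hornA (_ : _ + _ = 16%:R); [exact: natr_neq0 15| ring]. Qed.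
Lemma B0 : pB`_0 != 0.
Proof. rewrite -horner_coef0 hornB (_ : _ + _ = 4%:R); [exact: natr_neq0 3| ring]. Qed.
Lemma C0 : pC`_0 != 0.
Proof. rewrite -horner_coef0 hornC (_ : _ + _ = 8%:R); [exact: natr_neq0 7| ring]. Qed.

Lemma Q1 : pQ`_1 = - 2%:R. Proof. rewrite /pQ !coefE /=; ring. Qed.

Lemma coefA i : pA`_i = (i == 4)%:R + (i == 2)%:R *+ 4 + (i == 0)%:R *+ 16.
Proof. rewrite /pA !coefE; case: i => [|[|[|i]]] //=; ring. Qed.

Lemma coefl i : pl`_i = (i == 1)%:R + (i == 0)%:R *+ 2.
Proof. rewrite /pl !coefE; case: i => [|[|i]] //=; ring. Qed.

Lemma sizeA : size pA = 5%N.
Proof.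
apply/eqP; rewrite eqn_leq; apply/andP; split.
  apply/leq_sizeP => j hj; rewrite coefA.
  case: j hj => [|[|[|[|[|k]]]]] // _.
  by rewrite /= !mul0rn !addr0.
rewrite ltnNge; apply/negP => /leq_sizeP /(_ 4%N (leqnn _)); rewrite coefA /= !mul0rn !addr0.
by move/eqP; rewrite oner_eq0.
Qed.

Lemma sizel : size pl = 2%N.
Proof. by rewrite /pl -polyC_natr size_XaddC. Qed.

Lemma rhoA2 : (rho pA).[-2] != 0.
Proof.
rewrite /rho sizeA /rvK horner_poly /= !big_ord_recl big_ord0 /= !coefA /=.
rewrite /bump /=.
match goal with |- is_true (?a != _) => rewrite (_ : a = 273%:R) end; [by apply: natr_gt0 | ring].
Qed.

Lemma rhol2 : (rho pl).[-2] != 0.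
Proof.
rewrite /rho sizel /rvK horner_poly /= !big_ord_recl big_ord0 /= !coefl /=.
rewrite /bump /=.
match goal with |- is_true (?a != _) => rewrite (_ : a = - 3%:R) end; last by ring.
by rewrite oppr_eq0 (natr_neq0 2).
Qed.

Lemma lead_l : lead_coef pl = 1.
Proof. by rewrite /pl -polyC_natr lead_coefXaddC. Qed.

Lemma const_unit b c : b \in T -> c \in T -> size c = 1%N -> lead_coef (b * c) = 1 -> unitIn T c.
Proof.
move=> Tb Tc sc hl; have ec := size1_polyC (eq_leq sc).
move: hl; rewrite lead_coefM ec lead_coefC => hl.
have lb0 : lead_coef b != 0.
  by apply/eqP => lb; move: hl; rewrite lb mul0r => /eqP; rewrite eq_sym oner_eq0.
split; first by rewrite -ec.
split; first by rewrite -ec -size_poly_gt0 sc.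
exists (lead_coef b)%:P; split.
- by rewrite TC lead_coefE; move/TP: Tb; apply.
- by rewrite polyC_eq0.
- by rewrite -polyCM mulrC hl.
Qed.

Lemma atom_l : atomIn T pl.
Proof.
have l0' : pl != 0 by rewrite -size_poly_gt0 sizel.
split; [exact: Tl | exact: l0' | by move/unit_size; rewrite sizel |].
move=> b c Tb b0 Tc c0 e.
have := size_mul b0 c0; rewrite -e sizel.
have := size_poly_gt0 b; have := size_poly_gt0 c; rewrite b0 c0 => hc hb hs.
have [sb|sc] : size b = 1%N \/ size c = 1%N by lia.
  by left; apply: (@const_unit c b) => //; rewrite mulrC -e lead_l.
by right; apply: (@const_unit b c) => //; rewrite -e lead_l.
Qed.

Lemma fact_cat X Y f g : factorizationOf T X f -> factorizationOf T Y g ->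
  factorizationOf T (X * Y) (f ++ g).
Proof.
move=> [hf [u [hu eX]]] [hg [v [hv eY]]]; split.
  by move=> a; rewrite mem_cat => /orP [/hf|/hg].
by exists (u * v); split; [exact: unitM | rewrite eX eY big_cat /=; ring].
Qed.

Lemma fact1 a : atomIn T a -> factorizationOf T a [:: a].
Proof.
move=> ha; split; first by move=> b; rewrite inE => /eqP ->.
by exists 1; split; [exact: unit1 | rewrite big_seq1 mul1r].
Qed.

Lemma ndhorn Y : Y.[-2] != 0 -> forall r, r \in T -> Y <> pl * r.
Proof.
move=> h r _ e; move: h; rewrite e hornerM hornl (_ : -2 + 2 = 0) ?mul0r ?eqxx //; ring.
Qed.

Lemma ndC r : r \in T -> pC <> pl * r.
Proof.
move=> Tr; rewrite relCQ => /(mulfI _) e.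
have : pl != 0 by rewrite -size_poly_gt0 sizel.
move=> /e er; move/TP: Tr => /(_ 1%N); rewrite -er Q1.
by rewrite Sneg.
Qed.

Lemma count_l (f : seq {poly R}) : count (divl pl) ([:: pl] ++ f) != 0%N.
Proof.
rewrite /= (_ : divl pl pl = true) //; apply/pbP; exists 1; split; [exact: T1 | by rewrite mulr1].
Qed.

Lemma main_contra : LFS T -> False.
Proof.
move=> HL.
have nz p : p`_0 != 0 -> p != 0 by apply: contraNneq => ->; rewrite coef0.
have [fa hfa] := fact_exists HL TA (nz _ A0).
have [fb hfb] := fact_exists HL TB (nz _ B0).
have [fc hfc] := fact_exists HL TCC (nz _ C0).
have hra := rho_fact hfa A0; have hrb := rho_fact hfb B0; have hrc := rho_fact hfc C0.
have hl := fact1 atom_l; have hrl := fact1 (rho_atom atom_l l0).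
have hF := fact_cat hl (fact_cat hfa (fact_cat hrb hrc)).
have hG := fact_cat hfb (fact_cat hfc (fact_cat hrl hra)).
have eW : pl * (pA * (rho pB * rho pC)) = pB * (pC * (rho pl * rho pA)).
  by rewrite -!rhoM -relAB !mulrA relAB.
rewrite -eW in hG.
have TW : pl * (pA * (rho pB * rho pC)) \in T.
  by rewrite TM ?TM ?rhoT ?Tl ?TA ?TB ?TCC.
have W0 : pl * (pA * (rho pB * rho pC)) != 0.
  by rewrite !mulf_neq0 ?rho_neq0 ?nz ?l0 ?A0 ?B0 ?C0.
have ndB : forall r, r \in T -> pB <> pl * r.
  by apply: ndhorn; rewrite hornB (_ : _ + _ = 4%:R); [exact: natr_neq0 3 | ring].
have := HL.2 _ _ _ TW W0 hF hG; apply; last first.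
  by rewrite /= !size_cat /= !size_map; lia.
move=> hs; have := count_same pl hs.
rewrite (_ : count (divl pl) (fb ++ fc ++ [:: rho pl] ++ map rho fa) = 0%N).
  by move=> e; move: (count_l (fa ++ map rho fb ++ map rho fc)); rewrite e.
rewrite !count_cat (count_chunk hfb ndB) (count_chunk hfc ndC).
by rewrite (count_chunk hrl (ndhorn rhol2)) (count_chunk hra (ndhorn rhoA2)).
Qed.
End Main.

Unset Implicit Arguments.
Set Strict Implicit.

Theorem corollary5p3 (R : idomainType) (S : {pred R}) :
  semidomain S -> LFS (polysemi S) -> forall s, s \in S -> - s \in S.
Proof.
move=> HS HL s Hs; case Hm: (-1 \in S).
  by rewrite -mulN1r; case: HS => _ _ _ h; apply: h.
by case: (main_contra HS Hm HL).
Qed.
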